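(* Let $\varepsilon>0$ and let $\mathbb{F}$ be a field with $|\mathbb{F}|\ge n^2$. There exists a polynomial map $P : \mathbb{F}^{\lfloor 4 \varepsilon n^2\rfloor} \to \mathbb{F}^{n \times n}$, each of whose coordinates is a polynomial of degree at most $n^2$, such that every matrix $M\in\mathbb{F}^{n\times n}$ which is not $(\varepsilon n, \varepsilon n^2)$-rigid lies in the image of $P$.
   Context: A matrix $M\in\mathbb{F}^{n\times n}$ is $(r,s)$-rigid if $M$ cannot be written as $M=R+S$ with $\mathrm{rank}(R)\le r$ and $S$ having at most $s$ non-zero entries. *)

(* Defs.v *)
From HB Require Import structures.
From mathcomp Require Import all_boot all_order all_algebra.
From mathcomp Require Import reals.
From mathcomp Require Import mpoly.

Set Implicit Arguments.
Unset Strict Implicit.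
Unset Printing Implicit Defensive.

Import Order.TTheory GRing.Theory Num.Theory.
Local Open Scope ring_scope.

Definition nnz (F : fieldType) (m n : nat) (S : 'M[F]_(m, n)) : nat :=
  #|[set ij : 'I_m * 'I_n | S ij.1 ij.2 != 0]|.

Definition rigid (R : realType) (F : fieldType) (n : nat) (r s : R)
    (M : 'M[F]_n) : Prop :=
  ~ exists (L S : 'M[F]_n),
      [/\ M = L + S, (\rank L)%:R <= r & (nnz S)%:R <= s].

(* |F| >= k : F contains at least k distinct elements (F may be infinite). *)
Definition card_ge (F : fieldType) (k : nat) : Prop :=
  exists f : 'I_k -> F, injective f.

(* Main.v *)
Require Import Defs.
From HB Require Import structures.
From mathcomp Require Import all_boot all_order all_algebra.
From mathcomp Require Import reals.
From mathcomp Require Import mpoly.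
From Stdlib Require Import Classical.
From mathcomp Require Import zify ring lra.
Import Order.TTheory GRing.Theory Num.Theory.
Local Open Scope ring_scope.

Lemma count_neq_lt (N : nat) (w : 'I_N) :
  ((count (fun i0 : 'I_N => i0 != w) (index_enum 'I_N)).+1 <= N)%N.
Proof.
have h1 := count_predC (fun i0 : 'I_N => i0 != w) (index_enum 'I_N).
have h2 : (0 < count (predC (fun i0 : 'I_N => i0 != w)) (index_enum 'I_N))%N.
  by rewrite -has_count; apply/hasP; exists w; [exact: mem_index_enum | rewrite /= eqxx].
have h3 : size (index_enum 'I_N) = N by rewrite -[RHS](card_ord N) cardT enumT.
apply: (leq_trans _ (eq_leq h3)); by rewrite -h1 -addn1 leq_add2l.
Qed.

Section Helpers.
Variable F : fieldType.

Definition idx (V : finType) (K : nat) (hV : (#|V| <= K)%N) (v : V) : 'I_K :=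
  widen_ord hV (enum_rank v).

Arguments idx {V K} hV v.

Definition dec (V : finType) (K : nat) (hV : (#|V| <= K)%N) (g : V -> F)
  (i : 'I_K) : F :=
  if [pick v | idx hV v == i] is Some v then g v else 0.

Arguments dec {V K} hV g i.

Lemma dec_idx (V : finType) (K : nat) (hV : (#|V| <= K)%N) (g : V -> F) v :
  dec hV g (idx hV v) = g v.
Proof.
rewrite /dec; case: pickP => [v' /eqP h|/(_ v)]; last by rewrite eqxx.
have h2 : enum_rank v' = enum_rank v.
  by apply: val_inj; have := congr1 val h.
by rewrite (enum_rank_inj h2).
Qed.

Lemma msizeM' (K : nat) (p q : {mpoly F[K]}) :
  (msize (p * q) <= (msize p + msize q).-1)%N.
Proof.
have [->|nz_p] := eqVneq p 0; first by rewrite mul0r msize0.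
have [->|nz_q] := eqVneq q 0; first by rewrite mulr0 msize0.
by rewrite msizeM.
Qed.

Lemma msize_sum_le (K : nat) (I : finType) (P : pred I) (G : I -> {mpoly F[K]}) m :
  (forall i, P i -> (msize (G i) <= m)%N) ->
  (msize (\sum_(i | P i) G i) <= m)%N.
Proof.
move=> h; elim/big_ind: _ => //; first by rewrite msize0.
move=> x y hx hy /=; apply: leq_trans (msizeD_le x y) _; by rewrite geq_max hx hy.
Qed.

Lemma msize_prod_le (K : nat) (I : Type) (rr : seq I) (G : I -> {mpoly F[K]}) :
  (forall i, (msize (G i) <= 2)%N) ->
  (msize (\prod_(i <- rr) G i) <= (size rr).+1)%N.
Proof.
move=> h; elim: rr => [|a rr IH]; first by rewrite big_nil msize1.
rewrite big_cons; apply: leq_trans (msizeM' _ _ _) _.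
have := h a; have := IH; rewrite /=; lia.
Qed.

Lemma msizeXi (K : nat) (i : 'I_K) : msize ('X_i : {mpoly F[K]}) = 2%N.
Proof. by rewrite msizeX mdeg1. Qed.

Definition Lag (N K : nat) (f : 'I_N -> F) (w : 'I_N) (y : {mpoly F[K]}) :
  {mpoly F[K]} :=
  (\prod_(w' | w' != w) (f w - f w')^-1) *: \prod_(w' | w' != w) (y - (f w')%:MP).

Arguments Lag {N K} f w y.

Lemma Lag_eval (N K : nat) (f : 'I_N -> F) (w w0 : 'I_N) (y : {mpoly F[K]}) x :
  injective f -> y.@[x] = f w0 -> (Lag f w y).@[x] = (w0 == w)%:R.
Proof.
move=> finj hy; rewrite /Lag mevalZ rmorph_prod /=.
rewrite [X in _ * X](eq_bigr (fun i => f w0 - f i)); last by move=> i _; rewrite mevalB mevalC hy.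
have [<-|ne] := eqVneq w0 w.
  rewrite prodfV mulVf //; apply/prodf_neq0 => i hi.
  by rewrite subr_eq0; apply: contra hi => /eqP /finj ->.
by rewrite [X in _ * X](bigD1 w0) //= subrr mul0r mulr0.
Qed.

Lemma Lag_size (N K : nat) (f : 'I_N -> F) (w : 'I_N) (i : 'I_K) :
  (msize (Lag f w 'X_i) <= N)%N.
Proof.
rewrite /Lag; apply: leq_trans (msizeZ_le _ _) _.
rewrite -big_filter; apply: leq_trans (msize_prod_le _ _ _ _ _) _.
  move=> j; apply: leq_trans (msizeD_le _ _) _.
  by rewrite msizeN msizeC msizeXi geq_max; case: (_ != 0).
rewrite size_filter; exact: count_neq_lt.
Qed.

End Helpers.
Arguments idx {V K} hV v.
Arguments dec {F V K} hV g i.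
Arguments Lag {F N K} f w y.
Arguments msizeM' {F K} p q.
Arguments Lag_size {F N K} f w i.
Arguments msizeXi {F K} i.

Lemma sum_onth (T : Type) (V : nmodType) (e : seq T) (s : nat) (h : option T -> V) :
  h None = 0 -> (size e <= s)%N ->
  \sum_(t < s) h (onth e t) = \sum_(p <- e) h (Some p).
Proof.
move=> h0; rewrite -(big_mkord xpredT (fun t => h (onth e t))).
elim: e s => [|a e IH] s; first by move=> _; rewrite big_nil; apply: big1 => t _; case: t.
case: s => [//|s] /=; rewrite ltnS => hs.
by rewrite big_nat_recl // big_cons IH.
Qed.

Lemma mvi_eq (n : nat) (a b c d : 'I_n) :
  (mxvec_index a b == mxvec_index c d) = ((a, b) == (c, d)).
Proof.
apply/eqP/eqP => [h|[-> ->]] //.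
have h2 : enum_rank (a, b) = enum_rank (c, d).
  by apply: val_inj; have := congr1 val h.
exact: enum_rank_inj h2.
Qed.

Section Main.
Variables (F : fieldType) (n K r s : nat).
Variable f : 'I_(n * n) -> F.
Hypothesis finj : injective f.

Definition Vt : finType := ((('I_n * 'I_r) + ('I_r * 'I_n)) + ('I_s + 'I_s))%type.

Variable hV : (#|Vt| <= K)%N.

Definition Pm (i j : 'I_n) : {mpoly F[K]} :=
  \sum_(b < r) 'X_(idx hV (inl (inl (i, b)) : Vt)) * 'X_(idx hV (inl (inr (b, j)) : Vt))
  + \sum_(t < s) 'X_(idx hV (inr (inr t) : Vt)) *
        Lag f (mxvec_index i j) 'X_(idx hV (inr (inl t) : Vt)).

Lemma Pm_size (hrn : (0 < r)%N -> (2 <= n)%N) i j :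
  (msize (Pm i j) <= (n * n).+1)%N.
Proof.
have n0 : (0 < n)%N by apply: leq_ltn_trans (ltn_ord i).
apply: leq_trans (msizeD_le _ _) _; rewrite geq_max; apply/andP; split.
  apply: msize_sum_le => b _; apply: leq_trans (msizeM' _ _) _.
  rewrite !msizeXi; have := hrn (leq_ltn_trans (leq0n _) (ltn_ord b)); nia.
apply: msize_sum_le => t _; apply: leq_trans (msizeM' _ _) _.
rewrite msizeXi add2n /= ltnS; exact: Lag_size.
Qed.

Lemma Pm_cover (M L S : 'M[F]_n) : M = L + S -> (\rank L <= r)%N ->
  (nnz S <= s)%N -> exists x, forall i j, M i j = (Pm i j).@[x].
Proof.
move=> hM hrk hnz.
pose U : 'M[F]_(n, r) := col_ebase L *m pid_mx (\rank L).
pose W : 'M[F]_(r, n) := pid_mx (\rank L) *m row_ebase L.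
have hL : L = U *m W.
  by rewrite /U /W mulmxA -(mulmxA (col_ebase L)) pid_mx_id // mulmx_ebase.
pose supp := [set ij : 'I_n * 'I_n | S ij.1 ij.2 != 0].
pose e := enum supp.
have he : (size e <= s)%N by rewrite -cardE.
pose g : Vt -> F := fun v => match v with
  | inl (inl (a, b)) => U a b
  | inl (inr (b, c)) => W b c
  | inr (inl t) => if onth e t is Some p then f (mxvec_index p.1 p.2) else 0
  | inr (inr t) => if onth e t is Some p then S p.1 p.2 else 0
  end.
exists (dec hV g) => i j.
have LE : L i j = \sum_b U i b * W b j by rewrite {1}hL mxE.
pose h := fun o : option ('I_n * 'I_n) =>
  if o is Some p then S p.1 p.2 * (p == (i, j))%:R else 0.
rewrite /Pm mevalD !rmorph_sum /=.
rewrite (eq_bigr (fun b => U i b * W b j)); last first.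
  by move=> b _; rewrite mevalM !mevalXU !dec_idx.
rewrite [X in _ + X](eq_bigr (fun t : 'I_s => h (onth e t))); last first.
  move=> t _; rewrite mevalM mevalXU dec_idx /= /h.
  case E: (onth e t) => [p|]; last by rewrite mul0r.
  rewrite (@Lag_eval _ _ _ f (mxvec_index i j) (mxvec_index p.1 p.2)) //; last first.
    by rewrite mevalXU dec_idx /= E.
  by rewrite mvi_eq -surjective_pairing.
rewrite -LE sum_onth // big_enum /= hM mxE; congr (_ + _).
have [ijS|ijS] := boolP ((i, j) \in supp).
  rewrite (bigD1 (i, j)) //= eqxx mulr1 big1 ?addr0 // => p /andP [_ hne].
  by rewrite (negbTE hne) mulr0.
move: (ijS); rewrite inE negbK /= => /eqP ->.
rewrite big1 // => p hp; have -> : (p == (i, j)) = false.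
  by apply/negbTE; apply: contraNneq ijS => <-.
by rewrite mulr0.
Qed.

End Main.

Theorem lemma2p2 (R : realType) (eps : R) (F : fieldType) (n : nat) :
  0 < eps -> card_ge F (n ^ 2)%N ->
  exists P : 'I_n -> 'I_n -> {mpoly F[Num.truncn (4 * eps * (n%:R) ^+ 2)]},
    (forall i j, (msize (P i j) <= (n ^ 2).+1)%N) /\
    (forall M : 'M[F]_n,
       ~ rigid (eps * n%:R) (eps * (n%:R) ^+ 2) M ->
       exists x : 'I_(Num.truncn (4 * eps * (n%:R) ^+ 2)) -> F,
         forall i j, M i j = (P i j).@[x]).
Proof.
move=> eps0 [f0 f0inj].
set K := Num.truncn _.
have fI : injective (f0 \o cast_ord (mulnn n)).
  by move=> a b /= /f0inj /cast_ord_inj.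
rewrite -mulnn.
have [hK|hK] := leqP (n * n) K.
  have hV : (#|{: 'I_n * 'I_n}| <= K)%N by rewrite card_prod card_ord.
  exists (fun i j => 'X_(idx hV (i, j))); split.
    move=> i j; rewrite msizeXi; have := ltn_ord i; nia.
  move=> M _; exists (dec hV (fun p => M p.1 p.2)) => i j.
  by rewrite mevalXU dec_idx.
set r := Num.truncn (eps * n%:R).
set s := Num.truncn (eps * n%:R ^+ 2).
have n0 : 0 <= n%:R :> R by [].
have hr : r%:R <= eps * n%:R by rewrite truncn_le mulr_ge0 // ltW.
have hs : s%:R <= eps * n%:R ^+ 2 by rewrite truncn_le mulr_ge0 ?exprn_ge0 // ltW.
have hV : (#|Vt n r s| <= K)%N.
  rewrite !card_sum !card_prod !card_ord /K truncn_ge_nat; last first.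
    by rewrite mulr_ge0 ?exprn_ge0 // mulr_ge0 // ltW.
  rewrite !natrD !natrM.
  have h3 : 0 <= n%:R * (eps * n%:R - r%:R) by rewrite mulr_ge0 // subr_ge0.
  nra.
have hrn : (0 < r)%N -> (2 <= n)%N.
  move=> r0; rewrite leqNgt; apply/negP => n1.
  move: r0; rewrite /r truncn_gt0.
  move: hK; rewrite /K.
  case: n n1 {f0 f0inj fI hr hs hV n0 r s K} => [|[|m]] //= _.
  rewrite expr1n !mulr1 muln1 ltnS leqn0 => /eqP h.
  have : 4 * eps < 1.
    by have := truncnS_gt (4 * eps); rewrite h.
  move=> h4 h1; lra.
exists (@Pm _ _ _ _ _ (f0 \o cast_ord (mulnn n)) hV); split; first by move=> i j; exact: Pm_size.
move=> M /NNPP [L [S [hM hrk hnz]]].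
apply: (@Pm_cover _ _ _ _ _ _ fI hV M L S hM).
  by rewrite /r truncn_ge_nat // mulr_ge0 // ltW.
by rewrite /s truncn_ge_nat // mulr_ge0 ?exprn_ge0 // ltW.
Qed.
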